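(* Let $m\ge1$ and let $\widehat K_m$ be the finite cover of $K_{m,m}$ described below, viewed as a square subcomplex of the $2$–skeleton of $\mathcal T_{2m+1}$. Then (a) hyperplanes of $\widehat K_m$ do not self-intersect; (b) hyperplanes of $\widehat K_m$ do not self-osculate; (c) hyperplanes of $\widehat K_m$ are two-sided.
   Context: $G_{m,m}=\langle a_1,\dots,a_{2m+1}\mid [a_i,a_{i+1}]=1\ (1\le i\le m),\ a_{m+j+1}^{-1}a_ja_{m+j+1}=a_{m+j}\ (1\le j\le m)\rangle$ and $K_{m,m}$ is its presentation square complex. Let $H_n=\{0,1\}^n\subset H_{n+1}$ (append $0$), $H_n^*\subset H_{n+1}$ the tuples with last coordinate $1$, $\beta_i$ the flip of coordinate $i$, $\varphi_{k,m+k}$ the swap of coordinates $k$ and $m+k$. The right action $\pi$ of $G_{m,m}$ on $H_{2m+1}$ is defined by: $\pi(a_i)=\beta_i$ on $H_{m+1}$ ($i\le m+1$); for $k=1,\dots,m$, $\pi(a_{m+k+1})=\beta_{m+k+1}$ on $H_{m+k+1}$, and $\pi(a_j)|_{H^*_{m+k}}=\beta_{m+k+1}\circ\varphi_{k,m+k}\circ\pi(a_j)|_{H_{m+k}}\circ\varphi_{k,m+k}\circ\beta_{m+k+1}$ for $j\le m+k$. $\widehat K_m$ is the covering of $K_{m,m}$ corresponding to the stabilizer of $(0,\dots,0)$; its vertices are identified with $H_{2m+1}$, and it embeds cellularly into the $2$–skeleton of the torus $\mathcal T_{2m+1}=(\mathbb R/2\mathbb Z)^{2m+1}$ (product CW structure,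 each factor having $0$–cells $0,1$ and $1$–cells $[0,1],[1,2]$). A hyperplane of a square complex is a component of the complex formed by midcubes (midlines of squares and midpoints of edges). It self-intersects if it contains both midlines of some square; it self-osculates if two distinct dual edges share a vertex without lying in a common square; it is two-sided if there is a combinatorial map $H\times[0,1]\to X$ restricting to the identity on $H\times\{1/2\}$. *)

(* Defs.v *)
From mathcomp Require Import all_boot.
Set Implicit Arguments. Unset Strict Implicit. Unset Printing Implicit Defensive.

(*  A square complex has finitely many vertices, oriented edges (each 1-cell  *)
(*  carries a fixed reference orientation esrc -> etgt) and squares.  A       *)
(*  square s has corners c_0,c_1,c_2,c_3 (cyclically); its side k (k : 'I_4)  *)
(*  is the edge [side s k], running from c_k to c_(k+1 mod 4); [sfwd s k] is  *)
(*  true iff the reference orientation of that edge goes from c_k to          *)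
(*  c_(k+1).  Sides k and k+2 are opposite; the square has two midlines,      *)
(*  joining the midpoints of sides 0,2 and of sides 1,3.                      *)
Record sqcx := SqCx {
  vtx : finType; edg : finType; sqr : finType;
  esrc : edg -> vtx; etgt : edg -> vtx;
  side : sqr -> 'I_4 -> edg;
  sfwd : sqr -> 'I_4 -> bool }.

Definition opp4 (k : 'I_4) : 'I_4 := inord ((k + 2) %% 4).

Section Hyperplanes.
Variable X : sqcx.

(* Two edge midpoints are joined by a midline of a square iff they are the
   midpoints of opposite sides of that square. *)
Definition hadj : rel (edg X) :=
  fun e e' => [exists s : sqr X, exists k : 'I_4,
                 (side s k == e) && (side s (opp4 k) == e')].

(* e and e' are dual to the same hyperplane (the hyperplane, a connected
   component of the midcube complex, is determined by any dual edge; the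
   midline of s through side k lies in the hyperplane dual to side s k). *)
Definition same_hyp (e e' : edg X) : bool := connect hadj e e'.

(* The hyperplane H dual to e0 self-intersects: it contains both midlines of
   some square. *)
Definition self_intersects (e0 : edg X) : Prop :=
  exists s : sqr X, same_hyp e0 (side s (inord 0)) /\ same_hyp e0 (side s (inord 1)).

Definition share_vertex (e1 e2 : edg X) : bool :=
  [|| esrc e1 == esrc e2, esrc e1 == etgt e2, etgt e1 == esrc e2 | etgt e1 == etgt e2].

Definition in_common_square (e1 e2 : edg X) : Prop :=
  exists s : sqr X, (exists k, side s k = e1) /\ (exists k', side s k' = e2).

Definition self_osculates (e0 : edg X) : Prop :=
  exists e1 e2 : edg X, [/\ same_hyp e0 e1, same_hyp e0 e2, e1 != e2,
                            share_vertex e1 e2 & ~ in_common_square e1 e2].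

(* The hyperplane H dual to e0 is two-sided: there is a combinatorial map
   H x [0,1] -> X restricting to the identity on H x {1/2}.  Such a map sends
   each vertical edge e x [0,1] (e a dual edge) onto the edge e, which is
   recorded by o e (o e = true : (e,0) |-> esrc e, (e,1) |-> etgt e; false:
   the reverse), and each square mu x [0,1] (mu the midline of s joining
   sides k and k+2) onto s, with e x [0,1] |-> side k, w x [0,1] |-> side k+2
   and the horizontal edges (mu,t) onto the two remaining sides of s.  The
   latter is possible iff (e,0) sits at corner c_k exactly when (w,0) sits
   at corner c_(k+3), i.e. iff the condition below holds. *)
Definition two_sided (e0 : edg X) : Prop :=
  exists o : edg X -> bool, forall (s : sqr X) (k : 'I_4),
    same_hyp e0 (side s k) ->
    (o (side s k) == sfwd s k) = (o (side s (opp4 k)) != sfwd s (opp4 k)).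

End Hyperplanes.

(*  A point x of H_{2m+1} is x : {ffun 'I_(2m+1) -> bool}; paper coordinate   *)
(*  i (1 <= i <= 2m+1) is stored at ordinal i-1.  H_l is the set of points    *)
(*  whose coordinates > l vanish.                                             *)
Section Action.
Variable m : nat.
Local Notation n := (2 * m).+1.
Definition Hpt := {ffun 'I_n -> bool}.

Definition coord (x : Hpt) (i : nat) : bool := x (inord i.-1).
Definition flipc (i : nat) (x : Hpt) : Hpt :=
  [ffun t : 'I_n => if t.+1 == i then ~~ x t else x t].
Definition swapc (i j : nat) (x : Hpt) : Hpt :=
  [ffun t : 'I_n => if t.+1 == i then coord x j
                    else if t.+1 == j then coord x i else x t].

(* actk k j : pi(a_j) restricted to H_{m+k+1} (extended by the identity on
   the coordinates > m+k+1).  Level m+1: pi(a_j) = beta_j.  Level m+k+1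
   (k >= 1): pi(a_{m+k+1}) = beta_{m+k+1}; for j <= m+k, pi(a_j) agrees with
   the previous level on H_{m+k} (coordinate m+k+1 equal to 0) and equals
   beta_{m+k+1} o phi_{k,m+k} o pi(a_j)|_{H_{m+k}} o phi_{k,m+k} o beta_{m+k+1}
   on H^*_{m+k} (coordinate m+k+1 equal to 1). *)
Fixpoint actk (k j : nat) (x : Hpt) : Hpt :=
  match k with
  | 0 => flipc j x
  | k'.+1 =>
      let c := m + k'.+2 in
      if j == c then flipc c x
      else if coord x c then
        flipc c (swapc k'.+1 (m + k'.+1)
                   (actk k' j (swapc k'.+1 (m + k'.+1) (flipc c x))))
      else actk k' j x
  end.

(* generator a_j (paper index 1 <= j <= 2m+1) as an ordinal *)
Definition gen (j : nat) : 'I_n := inord j.-1.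

(* the right action of the generator with ordinal g (i.e. a_{g+1}) *)
Definition pi (g : 'I_n) (x : Hpt) : Hpt := actk m g.+1 x.

(* The covering complex \hat K_m of K_{m,m} (stabilizer of (0,...,0)), with   *)
(* vertex set H_{2m+1}.  Edge (x,g): the lift at x of the loop a_{g+1}, from  *)
(* x to x.a_{g+1}.  Square (x,false,r): the lift at x of the relator          *)
(* [a_i,a_{i+1}], i = r+1, read as a_i a_{i+1} a_i^-1 a_{i+1}^-1.  Square      *)
(* (x,true,r): the lift at x of the relator of a_{m+j+1}^-1 a_j a_{m+j+1} =   *)
(* a_{m+j}, j = r+1, read cyclically as a_j a_{m+j+1} a_{m+j}^-1 a_{m+j+1}^-1.*)
Definition Kedge := (Hpt * 'I_n)%type.
Definition Ksq := (Hpt * bool * 'I_m)%type.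

Definition Ksrc (e : Kedge) : Hpt := e.1.
Definition Ktgt (e : Kedge) : Hpt := pi e.2 e.1.

(* the two generators read positively along the first two sides, and the
   fourth one: square x -a-> x.a -b-> x.a.b = x.b.d <-d- x.b <-b- x *)
Definition Kletters (t : bool) (r : 'I_m) : 'I_n * 'I_n * 'I_n :=
  if t then (gen r.+1, gen (m + r.+2), gen (m + r.+1))
  else (gen r.+1, gen r.+2, gen r.+1).

Definition Kside (s : Ksq) (k : 'I_4) : Kedge :=
  let: (x, t, r) := s in
  let: (a, b, d) := Kletters t r in
  match val k with
  | 0 => (x, a)
  | 1 => (pi a x, b)
  | 2 => (pi b x, d)
  | _ => (x, b)
  end.

Definition Kfwd (s : Ksq) (k : 'I_4) : bool := val k < 2.

Definition Khat : sqcx := @SqCx Hpt Kedge Ksq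
  Ksrc Ktgt Kside Kfwd.

End Action.

(* Main.v *)
Require Import Defs.
From mathcomp Require Import all_boot.
From mathcomp Require Import zify.
Set Implicit Arguments. Unset Strict Implicit. Unset Printing Implicit Defensive.

Section S.
Variable m : nat.
Local Notation n := (2 * m).+1.

Definition sw (a b i : nat) : nat := if i == a then b else if i == b then a else i.

Fixpoint dl (k j : nat) (x : Hpt m) : nat :=
  match k with
  | 0 => j
  | k'.+1 =>
      let c := m + k'.+2 in
      if j == c then c
      else if coord x c then
        sw k'.+1 (m + k'.+1) (dl k' j (swapc k'.+1 (m + k'.+1) (flipc c x)))
      else dl k' j x
  end.

Lemma coordE (x : Hpt m) (t : 'I_n) : x t = coord x t.+1.
Proof. by rewrite /coord /=; congr (x _); apply/val_inj; rewrite /= inordK. Qed.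

Lemma Hpt_ext (x y : Hpt m) : (forall i, 1 <= i <= n -> coord x i = coord y i) -> x = y.
Proof. move=> H; apply/ffunP => t; rewrite !coordE; apply: H; have := ltn_ord t; lia. Qed.

Lemma coord_flip (x : Hpt m) d i : 1 <= i <= n ->
  coord (flipc d x) i = if i == d then ~~ coord x i else coord x i.
Proof. move=> Hi; rewrite /coord ffunE inordK; last lia.
by have -> : i.-1.+1 = i by lia. Qed.

Lemma coord_swap (x : Hpt m) a b i : 1 <= i <= n ->
  coord (swapc a b x) i = coord x (sw a b i).
Proof. move=> Hi; rewrite {1}/coord ffunE inordK; last lia.
have -> : i.-1.+1 = i by lia.
rewrite /sw; case: ifP => //; case: ifP => // _ _.
Qed.

Lemma flipC d e (x : Hpt m) : flipc d (flipc e x) = flipc e (flipc d x).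
Proof. apply/ffunP => t; rewrite !ffunE; by case: (t.+1 == d); case: (t.+1 == e). Qed.

Lemma flipK d (x : Hpt m) : flipc d (flipc d x) = x.
Proof. apply/ffunP => t; rewrite !ffunE; case: (t.+1 == d) => //; exact: negbK. Qed.

Lemma sw_range a b i N : 1 <= a <= N -> 1 <= b <= N -> 1 <= i <= N -> 1 <= sw a b i <= N.
Proof. rewrite /sw; case: ifP => //; case: ifP => //. Qed.

Lemma swK a b i : sw a b (sw a b i) = i.
Proof. rewrite /sw; case: (eqVneq i a) => [->|]; first by case: (eqVneq b a) => [->|]; rewrite ?eqxx.
case: (eqVneq i b) => [->|]; first by rewrite eqxx.
by move=> /negPf -> /negPf ->. Qed.

Lemma sw_inj a b : injective (sw a b).
Proof. exact: can_inj (@swK a b). Qed.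

Lemma swapK a b (x : Hpt m) : 1 <= a <= n -> 1 <= b <= n -> swapc a b (swapc a b x) = x.
Proof. move=> Ha Hb; apply: Hpt_ext => i Hi.
rewrite coord_swap // coord_swap ?swK //; exact: sw_range. Qed.

Lemma swap_flip a b d (x : Hpt m) : 1 <= a <= n -> 1 <= b <= n ->
  swapc a b (flipc d x) = flipc (sw a b d) (swapc a b x).
Proof. move=> Ha Hb; apply: Hpt_ext => i Hi.
rewrite coord_swap // coord_flip; last exact: sw_range.
rewrite coord_flip // coord_swap //.
have -> : (sw a b i == d) = (i == sw a b d).
  by apply/eqP/eqP => [<-|->]; rewrite swK.
done. Qed.


Lemma dl_range k j x : k <= m -> 1 <= j <= m + k.+1 -> 1 <= dl k j x <= m + k.+1.
Proof.
elim: k j x => [|k IH] j x /= Hk Hj; first lia.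
case: (eqVneq j (m + k.+2)) => [_|Hjc] /=; first lia.
have Hj' : 1 <= j <= m + k.+1 by lia.
case: (coord x _).
- apply: sw_range; [lia|lia|]. have := IH j (swapc k.+1 (m + k.+1) (flipc (m + k.+2) x)) ltac:(lia) Hj'; lia.
- have := IH j x ltac:(lia) Hj'; lia.
Qed.

Lemma actk_dl k j x : k <= m -> 1 <= j <= m + k.+1 -> actk k j x = flipc (dl k j x) x.
Proof.
elim: k j x => [|k IH] j x /= Hk Hj; first done.
case: (eqVneq j (m + k.+2)) => [_|Hjc] /=; first done.
have Hj' : 1 <= j <= m + k.+1 by lia.
case: (coord x _). 2: { apply: IH; lia. }
rewrite IH //; last lia.
rewrite swap_flip; [|lia|lia]. rewrite swapK; [|lia|lia].
by rewrite flipC flipK.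
Qed.

Lemma dl_low k j x : k < j <= m -> dl k j x = j.
Proof.
elim: k x => [|k IH] x Hj //=.
have -> : (j == m + k.+2) = false by apply/eqP; lia.
case: (coord x _); rewrite IH; try lia.
rewrite /sw; have -> : (j == k.+1) = false by apply/eqP; lia.
by have -> : (j == m + k.+1) = false by apply/eqP; lia.
Qed.

Lemma dl_top k x : dl k (m + k.+1) x = m + k.+1.
Proof. by case: k => [|k] //=; rewrite eqxx. Qed.

Definition T k (x : Hpt m) := swapc k.+1 (m + k.+1) (flipc (m + k.+2) x).

Lemma dl_S_true k j x : j != m + k.+2 -> coord x (m + k.+2) ->
  dl k.+1 j x = sw k.+1 (m + k.+1) (dl k j (T k x)).
Proof. by move=> /negPf Hj Hc /=; rewrite Hj Hc. Qed.

Lemma dl_S_false k j x : j != m + k.+2 -> coord x (m + k.+2) = false ->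
  dl k.+1 j x = dl k j x.
Proof. by move=> /negPf Hj Hc /=; rewrite Hj Hc. Qed.

Lemma T_flip k e x : k < m -> T k (flipc (sw k.+1 (m + k.+1) e) x) = flipc e (T k x).
Proof. move=> Hk; rewrite /T flipC swap_flip; [|lia|lia]. by rewrite swK. Qed.

Lemma coord_flip_ne (x : Hpt m) d c : 1 <= c <= n -> c != d -> coord (flipc d x) c = coord x c.
Proof. by move=> Hc /negPf Hd; rewrite coord_flip // Hd. Qed.

Definition sqk k a b d x := [&& dl k a x != dl k b x,
   dl k b (flipc (dl k a x) x) == dl k b x & dl k d (flipc (dl k b x) x) == dl k a x].

Lemma sq_step k a b d x : k < m -> 1 <= a <= m + k.+1 -> 1 <= b <= m + k.+1 ->
  1 <= d <= m + k.+1 -> (forall y, sqk k a b d y) -> sqk k.+1 a b d x.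
Proof.
move=> Hk Ha Hb Hd H.
have ac : a != m + k.+2 by apply/eqP; lia.
have bc : b != m + k.+2 by apply/eqP; lia.
have dc : d != m + k.+2 by apply/eqP; lia.
case Hx: (coord x (m + k.+2)).
- move/and3P: (H (T k x)) => [h1 /eqP h2 /eqP h3].
  have rA := dl_range (T k x) (ltnW Hk) Ha.
  have rB := dl_range (T k x) (ltnW Hk) Hb.
  rewrite /sqk !(dl_S_true _ Hx) //.
  have CA : coord (flipc (sw k.+1 (m + k.+1) (dl k a (T k x))) x) (m + k.+2).
    rewrite coord_flip_ne //; [lia|]. apply/eqP=> E.
    have := sw_range (a:=k.+1) (b:= m + k.+1) (i := dl k a (T k x)) (N := m + k.+1); lia.
  have CB : coord (flipc (sw k.+1 (m + k.+1) (dl k b (T k x))) x) (m + k.+2).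
    rewrite coord_flip_ne //; [lia|]. apply/eqP=> E.
    have := sw_range (a:=k.+1) (b:= m + k.+1) (i := dl k b (T k x)) (N := m + k.+1); lia.
  rewrite !(dl_S_true _ CA) // !(dl_S_true _ CB) // !T_flip // h2 h3 !eqxx.
  by rewrite (inj_eq (@sw_inj _ _)) h1.
- move/and3P: (H x) => [h1 /eqP h2 /eqP h3].
  have rA := dl_range x (ltnW Hk) Ha.
  have rB := dl_range x (ltnW Hk) Hb.
  rewrite /sqk !(dl_S_false _ Hx) //.
  have CA : coord (flipc (dl k a x) x) (m + k.+2) = false.
    rewrite coord_flip_ne //; [lia|]. apply/eqP=> E; lia.
  have CB : coord (flipc (dl k b x) x) (m + k.+2) = false.
    rewrite coord_flip_ne //; [lia|]. apply/eqP=> E; lia.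
  by rewrite !(dl_S_false _ CA) // !(dl_S_false _ CB) // h1 h2 h3 !eqxx.
Qed.


Definition Lvl k := [/\ (forall x j j', 1 <= j <= m + k.+1 -> 1 <= j' <= m + k.+1 ->
      dl k j x = dl k j' x -> j = j'),
  (forall x i, 1 <= i <= m -> sqk k i i.+1 i x) &
  (forall x j, 1 <= j <= k -> sqk k j (m + j.+1) (m + j) x)].

Lemma lvl0 : Lvl 0.
Proof.
split => //= [x i Hi|x j Hj]; last lia.
by rewrite /sqk /= !eqxx andbT; apply/eqP; lia.
Qed.

Lemma lvlS k : k < m -> Lvl k -> Lvl k.+1.
Proof.
move=> Hk [Inj Com Cnj]; split.
- move=> x j j' Hj Hj' E.
  case: (eqVneq j (m + k.+2)) => [Ej|Hjc]; case: (eqVneq j' (m + k.+2)) => [Ej'|Hjc'].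
  + by rewrite Ej Ej'.
  + exfalso; move: E; rewrite Ej dl_top.
    case Hx: (coord x (m + k.+2)).
    * rewrite (dl_S_true _ Hx) //.
      have := dl_range (T k x) (ltnW Hk) (j := j') ltac:(lia).
      have := sw_range (a:=k.+1) (b:= m + k.+1) (i := dl k j' (T k x)) (N := m + k.+1); lia.
    * rewrite (dl_S_false _ Hx) //.
      have := dl_range x (ltnW Hk) (j := j') ltac:(lia); lia.
  + exfalso; move: E; rewrite Ej' dl_top.
    case Hx: (coord x (m + k.+2)).
    * rewrite (dl_S_true _ Hx) //.
      have := dl_range (T k x) (ltnW Hk) (j := j) ltac:(lia).
      have := sw_range (a:=k.+1) (b:= m + k.+1) (i := dl k j (T k x)) (N := m + k.+1); lia.
    * rewrite (dl_S_false _ Hx) //.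
      have := dl_range x (ltnW Hk) (j := j) ltac:(lia); lia.
  + case Hx: (coord x (m + k.+2)).
    * move: E; rewrite !(dl_S_true _ Hx) // => /sw_inj; apply: Inj; lia.
    * move: E; rewrite !(dl_S_false _ Hx) //; apply: Inj; lia.
- move=> x i Hi; apply: sq_step => //; try lia. by move=> y; apply: Com.
- move=> x j Hj.
  case: (ltnP j k.+1) => Hjk.
    apply: sq_step => //; try lia. by move=> y; apply: Cnj; lia.
  have -> : j = k.+1 by lia.
  have top : forall y, dl k.+1 (m + k.+2) y = m + k.+2 by move=> y; exact: dl_top.
  have swb : sw k.+1 (m + k.+1) (m + k.+1) = k.+1.
    by rewrite /sw eqxx; have -> : (m + k.+1 == k.+1) = false by apply/eqP; lia.
  have swa : sw k.+1 (m + k.+1) k.+1 = m + k.+1 by rewrite /sw eqxx.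
  have kc : k.+1 != m + k.+2 by apply/eqP; lia.
  have mc : m + k.+1 != m + k.+2 by apply/eqP; lia.
  have Cf : coord (flipc (m + k.+2) x) (m + k.+2) = ~~ coord x (m + k.+2).
    by rewrite coord_flip ?eqxx //; lia.
  rewrite /sqk !top eqxx andTb.
  case Hx: (coord x (m + k.+2)).
  + rewrite (dl_S_true _ Hx) // dl_low ?swa; last lia.
    have Cf' : coord (flipc (m + k.+2) x) (m + k.+2) = false by rewrite Cf Hx.
    rewrite (dl_S_false _ Cf') // dl_top eqxx andbT; apply/eqP; lia.
  + rewrite (dl_S_false _ Hx) // dl_low; last lia.
    have Cf' : coord (flipc (m + k.+2) x) (m + k.+2) by rewrite Cf Hx.
    rewrite (dl_S_true _ Cf') // dl_top swb eqxx andbT; apply/eqP; lia.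
Qed.

Lemma lvlm : Lvl m.
Proof.
suff : forall k, k <= m -> Lvl k by apply.
elim=> [|k IH] Hk; first exact: lvl0.
apply: lvlS => //; apply: IH; lia.
Qed.

End S.


Section Main.
Variable m : nat.
Local Notation n := (2 * m).+1.

Definition D (x : Hpt m) (g : 'I_n) := dl m g.+1 x.
Definition inv (e : Kedge m) := (D e.1 e.2, coord e.1 (D e.1 e.2)).

Lemma gn (g : 'I_n) : 1 <= g.+1 <= m + m.+1.
Proof. have := ltn_ord g; lia. Qed.

Lemma pi_D (g : 'I_n) x : Defs.pi g x = flipc (D x g) x.
Proof. rewrite /Defs.pi /D actk_dl //; exact: gn. Qed.

Lemma D_range x (g : 'I_n) : 1 <= D x g <= n.
Proof. have := dl_range x (leqnn m) (gn g). rewrite /D; lia. Qed.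

Lemma gen_val j : 1 <= j <= n -> (gen m j : nat).+1 = j.
Proof. move=> Hj; rewrite /gen inordK; lia. Qed.

Lemma Kletters_sq t (r : 'I_m) x :
  sqk (m:=m) m (Kletters t r).1.1.+1 (Kletters t r).1.2.+1 (Kletters t r).2.+1 x.
Proof.
have Hr := ltn_ord r.
case: (lvlm m) => _ Com Cnj.
case: t => /=; rewrite !gen_val; try lia.
- apply: Cnj; lia.
- apply: Com; lia.
Qed.

Lemma Kside_inv (s : Ksq m) : exists A B, A != B /\ forall k : 'I_4,
  inv (Kside s k) = if odd k then (B, coord s.1.1 B) else (A, coord s.1.1 A).
Proof.
case: s => [[x t] r] /=.
have := Kletters_sq t r x; rewrite /Kside.
case: (Kletters t r) => [[a b] d] /= /and3P [h1 /eqP h2 /eqP h3].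
exists (D x a), (D x b); split => //.
have rA := D_range x a; have rB := D_range x b.
case => [[|[|[|[|k]]]] Hk] //=; rewrite /inv /= ?pi_D.
- rewrite /D h2 coord_flip_ne //. by rewrite eq_sym.
- rewrite /D h3 coord_flip_ne //.
Qed.

Lemma odd_opp4 (k : 'I_4) : odd (opp4 k) = odd k.
Proof. rewrite /opp4 inordK; last by rewrite ltn_pmod.
by case: k => [[|[|[|[|k]]]] Hk]. Qed.

Lemma hadj_inv (e e' : Kedge m) : hadj (X:=Khat m) e e' -> inv e = inv e'.
Proof.
move/existsP => [s /existsP [k /andP [/eqP <- /eqP <-]]] /=.
have [A [B [_ H]]] := Kside_inv s.
by rewrite !H odd_opp4.
Qed.

Lemma same_hyp_inv (e e' : Kedge m) : same_hyp (X := Khat m) e e' -> inv e = inv e'.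
Proof.
move/connectP => [p Hp ->]; elim: p e Hp => //= e1 p IH e /andP [h1 hp].
rewrite (hadj_inv h1); exact: IH.
Qed.

End Main.

Theorem proposition6p4 (m : nat) (hm : 1 <= m) :
  (forall e : edg (Khat m), ~ self_intersects e) /\
  (forall e : edg (Khat m), ~ self_osculates e) /\
  (forall e : edg (Khat m), two_sided e).
Proof.
split; [|split].
- move=> e [s [H0 H1]].
  have [A [B [AB H]]] := Kside_inv s.
  move: (same_hyp_inv H0) (same_hyp_inv H1) => /=.
  rewrite !H !inordK // => -> [E _].
  by rewrite E eqxx in AB.
- move=> e [[x g] [[y h] [h1 h2 ne sv _]]].
  have E := same_hyp_inv h2; rewrite (same_hyp_inv h1) in E.
  move: E; rewrite /inv /= => -[Ed Ec].
  have rd := D_range x g.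
  have key : x = y -> False.
    move=> Exy; subst y.
    case: (lvlm m) => Inj _ _.
    have := Inj x g.+1 h.+1 (gn g) (gn h) Ed => /eqP; rewrite eqSS => /eqP Egh.
    by move: ne; rewrite (val_inj Egh) eqxx.
  rewrite -Ed in Ec. move: sv; rewrite /share_vertex /= /Ktgt /= !pi_D -Ed.
  move: (D x g) rd Ec => d rd Ec.
  case/or4P => /eqP E.
  + exact: key.
  + move: Ec; rewrite E coord_flip // eqxx. by case: (coord y _).
  + move: Ec; rewrite -E coord_flip // eqxx. by case: (coord x _).
  + apply: key; by rewrite -(flipK d x) E flipK.
- move=> e; exists (fun e => (inv e).2) => s k _.
  have [A [B [AB H]]] := Kside_inv s.
  have H' : forall k', (inv (Kside s k')).2 = if odd k' then coord s.1.1 B else coord s.1.1 A.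
    by move=> k'; rewrite H; case: odd.
  change (((inv (Kside s k)).2 == Kfwd s k) = ((inv (Kside s (opp4 k))).2 != Kfwd s (opp4 k))).
  rewrite !H' odd_opp4 /Kfwd /opp4.
  case: k => [[|[|[|[|k]]]] Hk] //; rewrite /= ?inordK //; by case: (coord _ _).
Qed.
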